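(* Suppose Assumptions 1–4 hold and $p$ is convex. Let $\mathbf{x}$ be a Cournot candidate and $\mathbf{x}^S$ a social optimum with $p(X)\neq p(X^S)$ (so $X<X^S$ and $p$ is differentiable at $X$), and let $c=|p'(X)|$. Define $$p^0(q)=\begin{cases}-c(q-X)+p(X), & 0\le q\le X,\\ \max\left\{0,\ \dfrac{p(X^S)-p(X)}{X^S-X}(q-X)+p(X)\right\}, & q>X.\end{cases}$$ Consider the modified model with inverse demand $p^0$ and the same cost functions. Then $\mathbf{x}^S$ is socially optimal in the modified model, and the efficiency $\gamma^0(\mathbf{x})$ of $\mathbf{x}$ in the modified model satisfies $\gamma^0(\mathbf{x})\le\gamma(\mathbf{x})$.
   Context: Cournot model: $N$ suppliers, inverse demand $p:[0,\infty)\to[0,\infty)$, supplier $n$ has cost $C_n:[0,\infty)\to[0,\infty)$ and chooses $x_n\ge0$; $X=\sum_n x_n$, $X^S=\sum_n x_n^S$. $\partial_\pm$ denote right/left derivatives; $C_n'(0)$ is the right derivative at $0$. Assumption 1: each $C_n$ is convex, continuous, nondecreasing on $[0,\infty)$, continuously differentiable on $(0,\infty)$, with $C_n(0)=0$. Assumption 2: $p$ is continuous, nonnegative, nonincreasing, $p(0)>0$; its right derivative at $0$ exists and at every $q>0$ its left and right derivatives exist. Assumption 3: there exists $R>0$ such that $p(R)\le\min_n C_n'(0)$. Assumption 4: $p(0)>\min_n C_n'(0)$. Social welfare of $\mathbf{x}\ge0$ under inverse demand $\tilde p$: $\int_0^X \tilde p(q)\,dq-\sum_{n=1}^N C_n(x_n)$;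 a social optimum maximizes it over nonnegative vectors. Efficiency of $\mathbf{x}$: its welfare divided by the optimal welfare (for the respective model). A nonnegative vector $\mathbf{x}$ is a Cournot candidate if for every $n$: $C_n'(x_n)\le p(X)+x_n\,\partial_-p(X)$ whenever $x_n>0$, and $C_n'(x_n)\ge p(X)+x_n\,\partial_+p(X)$. *)

(* Defs.v *)
From Stdlib Require Import Reals Lra ClassicalEpsilon.
Open Scope R_scope.

Fixpoint sumN (N : nat) (f : nat -> R) : R :=
  match N with
  | O => 0
  | S n => sumN n f + f n
  end.

(* Riemann integral of f over [a,b] (value of RiemannInt when f is integrable;
   an unspecified real otherwise). *)
Definition integral (f : R -> R) (a b : R) : R :=
  epsilon (inhabits 0)
    (fun l => exists pr : Riemann_integrable f a b, RiemannInt pr = l).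

Definition right_deriv (f : R -> R) (x l : R) : Prop :=
  forall eps, 0 < eps -> exists delta, 0 < delta /\
    forall h, 0 < h < delta -> Rabs ((f (x + h) - f x) / h - l) < eps.

Definition left_deriv (f : R -> R) (x l : R) : Prop :=
  forall eps, 0 < eps -> exists delta, 0 < delta /\
    forall h, 0 < h < delta -> Rabs ((f (x - h) - f x) / (- h) - l) < eps.

Definition cont_nonneg (f : R -> R) : Prop :=
  forall x, 0 <= x -> forall eps, 0 < eps -> exists delta, 0 < delta /\
    forall y, 0 <= y -> Rabs (y - x) < delta -> Rabs (f y - f x) < eps.

Definition convex_nonneg (f : R -> R) : Prop :=
  forall a b t, 0 <= a -> 0 <= b -> 0 <= t <= 1 ->
    f (t * a + (1 - t) * b) <= t * f a + (1 - t) * f b.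

Definition nondecr_nonneg (f : R -> R) : Prop :=
  forall a b, 0 <= a -> a <= b -> f a <= f b.

Definition nonincr_nonneg (f : R -> R) : Prop :=
  forall a b, 0 <= a -> a <= b -> f b <= f a.

Definition assumption1 (N : nat) (C dC : nat -> R -> R) : Prop :=
  forall n, (n < N)%nat ->
    convex_nonneg (C n) /\ cont_nonneg (C n) /\ nondecr_nonneg (C n) /\
    (forall x, 0 < x -> derivable_pt_lim (C n) x (dC n x)) /\
    (forall x, 0 < x -> continuity_pt (dC n) x) /\
    right_deriv (C n) 0 (dC n 0) /\
    C n 0 = 0.

(* Assumption 2; dpp q = right derivative of p at q >= 0,
   dpm q = left derivative of p at q > 0. *)
Definition assumption2 (p dpm dpp : R -> R) : Prop :=
  cont_nonneg p /\ (forall q, 0 <= q -> 0 <= p q) /\ nonincr_nonneg p /\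
  0 < p 0 /\
  (forall q, 0 <= q -> right_deriv p q (dpp q)) /\
  (forall q, 0 < q -> left_deriv p q (dpm q)).

Definition assumption3 (N : nat) (dC : nat -> R -> R) (p : R -> R) : Prop :=
  exists Rb, 0 < Rb /\ forall n, (n < N)%nat -> p Rb <= dC n 0.

Definition assumption4 (N : nat) (dC : nat -> R -> R) (p : R -> R) : Prop :=
  exists n, (n < N)%nat /\ dC n 0 < p 0.

Definition nonneg_vec (N : nat) (x : nat -> R) : Prop :=
  forall n, (n < N)%nat -> 0 <= x n.

Definition welfare (p : R -> R) (N : nat) (C : nat -> R -> R) (x : nat -> R) : R :=
  integral p 0 (sumN N x) - sumN N (fun n => C n (x n)).

Definition social_optimum (p : R -> R) (N : nat) (C : nat -> R -> R)
  (xS : nat -> R) : Prop :=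
  nonneg_vec N xS /\
  forall y, nonneg_vec N y -> welfare p N C y <= welfare p N C xS.

(* efficiency of x relative to a social optimum xS (optimal welfare = welfare of xS) *)
Definition efficiency (p : R -> R) (N : nat) (C : nat -> R -> R) (x xS : nat -> R) : R :=
  welfare p N C x / welfare p N C xS.

Definition cournot_candidate (p dpm dpp : R -> R) (N : nat) (dC : nat -> R -> R)
  (x : nat -> R) : Prop :=
  nonneg_vec N x /\
  forall n, (n < N)%nat ->
    (0 < x n -> dC n (x n) <= p (sumN N x) + x n * dpm (sumN N x)) /\
    p (sumN N x) + x n * dpp (sumN N x) <= dC n (x n).

Definition p0 (p : R -> R) (X XS c : R) (q : R) : R :=
  if Rle_dec q X then - c * (q - X) + p X
  else Rmax 0 ((p XS - p X) / (XS - X) * (q - X) + p X).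

(* Main.v *)
Require Import Defs.
From Stdlib Require Import Reals Lra Lia Psatz ClassicalEpsilon.
Open Scope R_scope.

Lemma integral_eq f a b (pr : Riemann_integrable f a b) :
  integral f a b = RiemannInt pr.
Proof.
  unfold integral.
  destruct (epsilon_spec (inhabits 0)
    (fun l => exists pr : Riemann_integrable f a b, RiemannInt pr = l)
    (ex_intro _ _ (ex_intro _ pr eq_refl))) as [pr' H].
  rewrite <- H. apply RiemannInt_P5.
Qed.

Arguments integral_eq {f a b}.
Definition RI (f : R -> R) := forall a b, 0 <= a -> a <= b -> Riemann_integrable f a b.

Lemma int_zero f : integral f 0 0 = 0.
Proof. rewrite (integral_eq (RiemannInt_P7 f 0)). apply RiemannInt_P9. Qed.

Lemma int_diff f a b (H : RI f) (ha : 0 <= a) (hab : a <= b) :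
  integral f 0 b - integral f 0 a = RiemannInt (H a b ha hab).
Proof.
  rewrite (integral_eq (H 0 b (Rle_refl 0) (Rle_trans _ _ _ ha hab))).
  rewrite (integral_eq (H 0 a (Rle_refl 0) ha)).
  rewrite <- (RiemannInt_P26 (H 0 a (Rle_refl 0) ha) (H a b ha hab)
     (H 0 b (Rle_refl 0) (Rle_trans _ _ _ ha hab))). ring.
Qed.

Arguments int_diff {f a b}.
Lemma int_bounds f a b l u (H : RI f) : 0 <= a -> a <= b ->
  (forall x, a < x < b -> l <= f x <= u) ->
  l * (b - a) <= integral f 0 b - integral f 0 a <= u * (b - a).
Proof.
  intros ha hab hf. rewrite (int_diff H ha hab). apply RiemannInt_const_bound; auto.
Qed.

Lemma int_cmp f g a b (Hf : RI f) (Hg : RI g) : 0 <= a -> a <= b ->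
  (forall x, a < x < b -> f x <= g x) ->
  integral f 0 b - integral f 0 a <= integral g 0 b - integral g 0 a.
Proof.
  intros ha hab hf. rewrite (int_diff Hf ha hab), (int_diff Hg ha hab).
  apply RiemannInt_P19; auto.
Qed.

Lemma lip_cont g x K : 0 <= K -> (forall y, Rabs (g y - g x) <= K * Rabs (y - x)) ->
  continuity_pt g x.
Proof.
  intros hK hg. unfold continuity_pt, continue_in, limit1_in, limit_in; simpl; unfold R_dist.
  intros eps heps. exists (eps / (K + 1)). split.
  - apply Rdiv_lt_0_compat; lra.
  - intros y [_ hy]. eapply Rle_lt_trans. apply hg.
    assert (K * Rabs (y - x) <= K * (eps / (K+1))).
    { apply Rmult_le_compat_l; lra. }
    assert (K * (eps / (K+1)) < eps).
    { apply Rmult_lt_reg_r with (K+1). lra. field_simplify; nra. }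
    lra.
Qed.

Lemma Rmax0_lip a b : Rabs (Rmax 0 a - Rmax 0 b) <= Rabs (a - b).
Proof.
  unfold Rmax; destruct (Rle_dec 0 a); destruct (Rle_dec 0 b);
  unfold Rabs; repeat destruct Rcase_abs; lra.
Qed.

Lemma cont_RI f : cont_nonneg f -> RI f.
Proof.
  intros hf a b ha hab.
  apply Riemann_integrable_ext with (fun y => f (Rmax 0 y)).
  { intros y hy. rewrite Rmin_left in hy by lra. rewrite Rmax_right by lra. reflexivity. }
  apply continuity_implies_RiemannInt; auto.
  intros x hx. unfold continuity_pt, continue_in, limit1_in, limit_in; simpl; unfold R_dist.
  intros eps heps. destruct (hf x ltac:(lra) eps heps) as [d [hd H]].
  exists d. split; auto. intros y [_ hy].
  rewrite (Rmax_right 0 x) by lra.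
  apply H. apply Rmax_l. eapply Rle_lt_trans; [|exact hy].
  replace x with (Rmax 0 x) at 1 by (apply Rmax_right; lra). apply Rmax0_lip.
Qed.

Lemma conv_K f u v w : convex_nonneg f -> 0 <= u -> u < v -> v < w ->
  (w - u) * f v <= (w - v) * f u + (v - u) * f w.
Proof.
  intros hf hu huv hvw.
  set (t := (w - v) / (w - u)).
  assert (ht : 0 <= t <= 1).
  { unfold t; split. apply Rmult_le_pos; [lra|apply Rlt_le, Rinv_0_lt_compat; lra].
    apply Rmult_le_reg_r with (w-u). lra. field_simplify; lra. }
  pose proof (hf u w t hu ltac:(lra) ht) as H.
  replace (t * u + (1 - t) * w) with v in H by (unfold t; field; lra).
  assert (Heq: (w - u) * (t * f u + (1 - t) * f w) = (w - v) * f u + (v - u) * f w)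
    by (unfold t; field; lra).
  rewrite <- Heq. apply Rmult_le_compat_l; lra.
Qed.

Lemma rd_le f a l K d0 : right_deriv f a l -> 0 < d0 ->
  (forall h, 0 < h < d0 -> (f (a + h) - f a) / h <= K) -> l <= K.
Proof.
  intros hd hd0 hq. destruct (Rle_dec l K) as [|hn]; auto. exfalso.
  destruct (hd (l - K) ltac:(lra)) as [d [hdp H]].
  set (h := Rmin d d0 / 2).
  assert (0 < h < d /\ h < d0).
  { unfold h. pose proof (Rmin_l d d0). pose proof (Rmin_r d d0).
    assert (0 < Rmin d d0) by (apply Rmin_glb_lt; lra). lra. }
  specialize (H h ltac:(lra)). specialize (hq h ltac:(lra)).
  apply Rabs_def2 in H. lra.
Qed.

Lemma rd_ge f a l K d0 : right_deriv f a l -> 0 < d0 ->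
  (forall h, 0 < h < d0 -> K <= (f (a + h) - f a) / h) -> K <= l.
Proof.
  intros hd hd0 hq. destruct (Rle_dec K l) as [|hn]; auto. exfalso.
  destruct (hd (K - l) ltac:(lra)) as [d [hdp H]].
  set (h := Rmin d d0 / 2).
  assert (0 < h < d /\ h < d0).
  { unfold h. pose proof (Rmin_l d d0). pose proof (Rmin_r d d0).
    assert (0 < Rmin d d0) by (apply Rmin_glb_lt; lra). lra. }
  specialize (H h ltac:(lra)). specialize (hq h ltac:(lra)).
  apply Rabs_def2 in H. lra.
Qed.

Lemma ld_le f a l K d0 : left_deriv f a l -> 0 < d0 ->
  (forall h, 0 < h < d0 -> (f (a - h) - f a) / (- h) <= K) -> l <= K.
Proof.
  intros hd hd0 hq. destruct (Rle_dec l K) as [|hn]; auto. exfalso.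
  destruct (hd (l - K) ltac:(lra)) as [d [hdp H]].
  set (h := Rmin d d0 / 2).
  assert (0 < h < d /\ h < d0).
  { unfold h. pose proof (Rmin_l d d0). pose proof (Rmin_r d d0).
    assert (0 < Rmin d d0) by (apply Rmin_glb_lt; lra). lra. }
  specialize (H h ltac:(lra)). specialize (hq h ltac:(lra)).
  apply Rabs_def2 in H. lra.
Qed.

Lemma deriv_right f x l : derivable_pt_lim f x l -> right_deriv f x l.
Proof.
  intros H eps heps. destruct (H eps heps) as [d Hd]. exists d. split. apply cond_pos.
  intros h hh. apply Hd. lra. rewrite Rabs_right; lra.
Qed.

Lemma deriv_left f x l : derivable_pt_lim f x l -> left_deriv f x l.
Proof.
  intros H eps heps. destruct (H eps heps) as [d Hd]. exists d. split. apply cond_pos.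
  intros h hh. replace (x - h) with (x + - h) by ring. apply Hd. lra.
  rewrite Rabs_left; lra.
Qed.

Lemma subgrad f a l y : convex_nonneg f -> 0 <= a -> 0 <= y -> right_deriv f a l ->
  f a + l * (y - a) <= f y.
Proof.
  intros hf ha hy hd.
  destruct (Rtotal_order y a) as [hlt|[heq|hgt]].
  -
    set (K := (f a - f y) / (a - y)).
    assert (K <= l).
    { apply (rd_ge f a l K 1 hd). lra. intros h hh.
      pose proof (conv_K f y a (a + h) hf hy hlt ltac:(lra)) as HK.
      unfold K. apply Rmult_le_reg_r with (h * (a - y)). nra.
      replace ((f a - f y) / (a - y) * (h * (a - y))) with ((f a - f y) * h) by (field; lra).
      replace ((f (a + h) - f a) / h * (h * (a - y))) with ((f (a + h) - f a) * (a - y)) by (field; lra).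
      nra. }
    assert (f a - f y = K * (a - y)) by (unfold K; field; lra). nra.
  - subst. lra.
  - set (K := (f y - f a) / (y - a)).
    assert (l <= K).
    { apply (rd_le f a l K (y - a) hd). lra. intros h hh.
      pose proof (conv_K f a (a + h) y hf ha ltac:(lra) ltac:(lra)) as HK.
      unfold K. apply Rmult_le_reg_r with (h * (y - a)). nra.
      replace ((f y - f a) / (y - a) * (h * (y - a))) with ((f y - f a) * h) by (field; lra).
      replace ((f (a + h) - f a) / h * (h * (y - a))) with ((f (a + h) - f a) * (y - a)) by (field; lra).
      nra. }
    assert (f y - f a = K * (y - a)) by (unfold K; field; lra). nra.
Qed.

Lemma sum_ext N f g : (forall k, (k < N)%nat -> f k = g k) -> sumN N f = sumN N g.
Proof. induction N; simpl; intros H; auto. rewrite IHN by (intros; apply H; lia). rewrite H by lia. auto. Qed.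

Lemma sum_le N f g : (forall k, (k < N)%nat -> f k <= g k) -> sumN N f <= sumN N g.
Proof. induction N; simpl; intros H. lra. pose proof (IHN ltac:(intros; apply H; lia)). pose proof (H N ltac:(lia)). lra. Qed.

Lemma sum_lin N f g a b : sumN N (fun k => a * f k + b * g k) = a * sumN N f + b * sumN N g.
Proof. induction N; simpl. ring. rewrite IHN. ring. Qed.

Lemma sum_zero N : sumN N (fun _ => 0) = 0.
Proof. induction N; simpl; auto. rewrite IHN; ring. Qed.

Lemma sum_nonneg N f : (forall k, (k < N)%nat -> 0 <= f k) -> 0 <= sumN N f.
Proof. intros H. rewrite <- (sum_zero N). apply sum_le. auto. Qed.

Lemma sum_upd N f g n : (n < N)%nat -> (forall k, (k < N)%nat -> k <> n -> g k = f k) ->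
  sumN N g = sumN N f + (g n - f n).
Proof.
  induction N; simpl; intros hn H. lia.
  destruct (Nat.eq_dec n N).
  - subst. rewrite (sum_ext N g f) by (intros; apply H; lia). ring.
  - rewrite IHN by (try lia; intros; apply H; lia). rewrite (H N) by lia. ring.
Qed.

Lemma term_le N f n : (forall k, (k < N)%nat -> 0 <= f k) -> (n < N)%nat -> f n <= sumN N f.
Proof.
  intros H hn.
  pose proof (sum_upd N f (fun k => if Nat.eq_dec k n then 0 else f k) n hn).
  simpl in H0. destruct (Nat.eq_dec n n); [|congruence].
  assert (0 <= sumN N (fun k => if Nat.eq_dec k n then 0 else f k)).
  { apply sum_nonneg. intros k hk. destruct (Nat.eq_dec k n); auto. lra. }
  rewrite H0 in H1. lra. intros k hk hkn. destruct (Nat.eq_dec k n); congruence.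
Qed.

Lemma sum_exists_lt N f g : sumN N f < sumN N g -> exists n, (n < N)%nat /\ f n < g n.
Proof.
  induction N; simpl; intros H. lra.
  destruct (Rlt_dec (f N) (g N)). exists N; split; auto.
  destruct IHN as [m [hm hf]]. lra. exists m; split; auto.
Qed.

Lemma int_lower f a b l (H : RI f) : 0 <= a -> a <= b ->
  (forall x, a < x < b -> l <= f x) -> l * (b - a) <= integral f 0 b - integral f 0 a.
Proof.
  intros ha hab hf. rewrite (int_diff H ha hab).
  rewrite <- (RiemannInt_P15 (RiemannInt_P14 a b l)).
  apply RiemannInt_P19; auto.
Qed.

Lemma int_upper f a b u (H : RI f) : 0 <= a -> a <= b ->
  (forall x, a < x < b -> f x <= u) -> integral f 0 b - integral f 0 a <= u * (b - a).
Proof.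
  intros ha hab hf. rewrite (int_diff H ha hab).
  rewrite <- (RiemannInt_P15 (RiemannInt_P14 a b u)).
  apply RiemannInt_P19; auto.
Qed.

Lemma sum_scal N f a : sumN N (fun k => a * f k) = a * sumN N f.
Proof. induction N; simpl. ring. rewrite IHN. ring. Qed.

Lemma final_ineq Wx Ws A B : 0 <= Wx <= Ws -> 0 <= A -> 0 <= B -> 0 <= Ws - A + B ->
  (Wx - A) / (Ws - A + B) <= Wx / Ws.
Proof.
  intros hW hA hB hD. unfold Rdiv.
  destruct (Req_dec Ws 0) as [h0|h0].
  - assert (Wx = 0) by lra. subst. rewrite Rinv_0.
    destruct (Req_dec (0 - A + B) 0) as [e|e].
    + rewrite e, Rinv_0. lra.
    + assert (0 < / (0 - A + B)) by (apply Rinv_0_lt_compat; lra). nra.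
  - destruct (Req_dec (Ws - A + B) 0) as [e|e].
    + rewrite e, Rinv_0. assert (0 < / Ws) by (apply Rinv_0_lt_compat; lra). nra.
    + apply Rmult_le_reg_r with ((Ws - A + B) * Ws). nra.
      replace ((Wx - A) * / (Ws - A + B) * ((Ws - A + B) * Ws)) with ((Wx - A) * Ws) by (field; lra).
      replace (Wx * / Ws * ((Ws - A + B) * Ws)) with (Wx * (Ws - A + B)) by (field; lra).
      nra.
Qed.

Theorem proposition9 (N : nat) (C dC : nat -> R -> R) (p dpm dpp : R -> R)
  (x xS : nat -> R) :
  assumption1 N C dC ->
  assumption2 p dpm dpp ->
  assumption3 N dC p ->
  assumption4 N dC p ->
  convex_nonneg p ->
  cournot_candidate p dpm dpp N dC x ->
  social_optimum p N C xS ->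
  p (sumN N x) <> p (sumN N xS) ->
  let X := sumN N x in
  let XS := sumN N xS in
  let c := Rabs (dpp X) in
  social_optimum (p0 p X XS c) N C xS /\
  efficiency (p0 p X XS c) N C x xS <= efficiency p N C x xS.
Proof.
  intros H1 H2 _ _ hpc hcour hopt hne X XS c.
  assert (hX : X = sumN N x) by reflexivity. clearbody X.
  assert (hXS : XS = sumN N xS) by reflexivity. clearbody XS.
  destruct H2 as [hpcont [hpnn [hpni [hp0 [hdpp hdpm]]]]].
  destruct hcour as [hxnn hxc]. destruct hopt as [hxSnn hxSopt].
  rewrite <- hX, <- hXS in hne.
  assert (hX0 : 0 <= X) by (rewrite hX; apply sum_nonneg; auto).
  assert (hXS0 : 0 <= XS) by (rewrite hXS; apply sum_nonneg; auto).
  assert (hpI : RI p) by (apply cont_RI; auto).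
  assert (C_rd : forall n, (n < N)%nat -> forall s, 0 <= s -> right_deriv (C n) s (dC n s)).
  { intros n hn s hs. destruct (H1 n hn) as [_ [_ [_ [hd [_ [hr _]]]]]].
    destruct (Req_dec s 0) as [e|e]. subst; auto. apply deriv_right, hd. lra. }
  assert (C_sub : forall n, (n < N)%nat -> forall s y, 0 <= s -> 0 <= y ->
     C n s + dC n s * (y - s) <= C n y).
  { intros n hn s y hs hy. apply subgrad; auto. apply (H1 n hn). }
  assert (C0 : forall n, (n < N)%nat -> C n 0 = 0) by (intros n hn; apply (H1 n hn)).
  assert (pert : forall n, (n < N)%nat -> forall v, 0 <= v ->
     let y := fun k => if Nat.eq_dec k n then v else xS k in
     integral p 0 (XS + (v - xS n)) - (sumN N (fun k => C k (xS k)) + (C n v - C n (xS n)))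
       <= integral p 0 XS - sumN N (fun k => C k (xS k))).
  { intros n hn v hv y.
    assert (hy : nonneg_vec N y).
    { intros k hk. unfold y. destruct (Nat.eq_dec k n); auto. }
    pose proof (hxSopt y hy) as Hw. unfold welfare in Hw.
    rewrite (sum_upd N xS y n hn) in Hw
      by (intros k hk hkn; unfold y; destruct (Nat.eq_dec k n); congruence).
    rewrite (sum_upd N (fun k => C k (xS k)) (fun k => C k (y k)) n hn) in Hw
      by (intros k hk hkn; unfold y; destruct (Nat.eq_dec k n); congruence).
    unfold y in Hw. destruct (Nat.eq_dec n n); [|congruence].
    rewrite <- hXS in Hw. exact Hw. }
  assert (KKT1 : forall n, (n < N)%nat -> p XS <= dC n (xS n)).
  { intros n hn. set (s := xS n). assert (hs : 0 <= s) by (apply hxSnn; auto).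
    destruct (Rle_dec (p XS) (dC n s)) as [|hlt]; auto. exfalso.
    set (eps := (p XS - dC n s) / 2).
    destruct (C_rd n hn s hs eps ltac:(unfold eps; lra)) as [d1 [hd1 Hd1]].
    destruct (hpcont XS hXS0 eps ltac:(unfold eps; lra)) as [d2 [hd2 Hd2]].
    set (h := Rmin d1 d2 / 2).
    assert (hh : 0 < h < d1 /\ h < d2).
    { unfold h. pose proof (Rmin_l d1 d2). pose proof (Rmin_r d1 d2).
      assert (0 < Rmin d1 d2) by (apply Rmin_glb_lt; lra). lra. }
    pose proof (pert n hn (s + h) ltac:(lra)) as Hw. simpl in Hw. fold s in Hw.
    replace (XS + (s + h - s)) with (XS + h) in Hw by ring.
    assert (hI : p (XS + h) * (XS + h - XS) <= integral p 0 (XS + h) - integral p 0 XS).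
    { apply int_lower; auto. lra. intros q hq. apply hpni; lra. }
    specialize (Hd2 (XS + h) ltac:(lra) ltac:(replace (XS + h - XS) with h by ring; rewrite Rabs_right; lra)).
    apply Rabs_def2 in Hd2.
    specialize (Hd1 h ltac:(lra)). apply Rabs_def2 in Hd1.
    set (q := (C n (s + h) - C n s) / h) in Hd1.
    assert (hq : C n (s + h) - C n s = q * h) by (unfold q; field; lra).
    assert (p XS - eps < dC n s + eps) by nra.
    unfold eps in H; lra. }
  assert (KKT2 : forall n, (n < N)%nat -> 0 < xS n -> dC n (xS n) <= p XS).
  { intros n hn. set (s := xS n). intros hs.
    destruct (Rle_dec (dC n s) (p XS)) as [|hlt]; auto. exfalso.
    set (eps := (dC n s - p XS) / 2).
    destruct (H1 n hn) as [_ [_ [_ [hder _]]]].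
    destruct (deriv_left _ _ _ (hder s hs) eps ltac:(unfold eps; lra)) as [d1 [hd1 Hd1]].
    destruct (hpcont XS hXS0 eps ltac:(unfold eps; lra)) as [d2 [hd2 Hd2]].
    set (h := Rmin (Rmin d1 d2) s / 2).
    assert (hh : 0 < h < d1 /\ h < d2 /\ h < s).
    { unfold h. pose proof (Rmin_l d1 d2). pose proof (Rmin_r d1 d2).
      pose proof (Rmin_l (Rmin d1 d2) s). pose proof (Rmin_r (Rmin d1 d2) s).
      assert (0 < Rmin d1 d2) by (apply Rmin_glb_lt; lra).
      assert (0 < Rmin (Rmin d1 d2) s) by (apply Rmin_glb_lt; lra). lra. }
    assert (hsX : s <= XS) by (rewrite hXS; apply term_le; auto).
    pose proof (pert n hn (s - h) ltac:(lra)) as Hw. simpl in Hw. fold s in Hw.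
    replace (XS + (s - h - s)) with (XS - h) in Hw by ring.
    assert (hI : integral p 0 XS - integral p 0 (XS - h) <= p (XS - h) * (XS - (XS - h))).
    { apply int_upper; auto. lra. lra. intros q hq. apply hpni; lra. }
    specialize (Hd2 (XS - h) ltac:(lra) ltac:(replace (XS - h - XS) with (-h) by ring; rewrite Rabs_left; lra)).
    apply Rabs_def2 in Hd2.
    specialize (Hd1 h ltac:(lra)). apply Rabs_def2 in Hd1.
    set (q := (C n (s - h) - C n s) / - h) in Hd1.
    assert (hq : C n (s - h) - C n s = q * (- h)) by (unfold q; field; lra).
    assert (dC n s - eps < p XS + eps) by nra.
    unfold eps in H; lra. }
  assert (hdpm0 : 0 < X -> dpm X <= 0).
  { intros hXp. apply (ld_le p X (dpm X) 0 X (hdpm X hXp) hXp).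
    intros h hh. assert (p X <= p (X - h)) by (apply hpni; lra).
    replace ((p (X - h) - p X) / - h) with (- ((p (X - h) - p X) / h)) by (field; lra).
    assert (0 <= (p (X - h) - p X) / h).
    { apply Rmult_le_pos; [lra | left; apply Rinv_0_lt_compat; lra]. }
    lra. }
  assert (hXlt : X < XS).
  { destruct (Rtotal_order X XS) as [|[e|hgt]]; auto.
    - subst; congruence.
    - exfalso. rewrite hX, hXS in hgt. destruct (sum_exists_lt N xS x hgt) as [n [hn hlt]].
      rewrite <- hX, <- hXS in hgt.
      assert (hs : 0 <= xS n) by auto.
      destruct (hxc n hn) as [hc1 _]. rewrite <- hX in hc1.
      specialize (hc1 ltac:(lra)).
      pose proof (hdpm0 ltac:(lra)).
      pose proof (C_sub n hn (xS n) (x n) hs ltac:(lra)).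
      pose proof (C_sub n hn (x n) (xS n) ltac:(lra) hs).
      assert (dC n (xS n) <= dC n (x n)) by nra.
      pose proof (KKT1 n hn).
      assert (p X <= p XS) by (apply hpni; lra).
      assert (p XS <= p X) by nra. apply hne; lra. }
  assert (hdpp0 : dpp X <= 0).
  { apply (rd_le p X (dpp X) 0 1 (hdpp X hX0)). lra. intros h hh.
    assert (p (X + h) <= p X) by (apply hpni; lra).
    replace ((p (X + h) - p X) / h) with (- ((p X - p (X + h)) / h)) by (field; lra).
    assert (0 <= (p X - p (X + h)) / h).
    { apply Rmult_le_pos; [lra | left; apply Rinv_0_lt_compat; lra]. }
    lra. }
  assert (hc : c = - dpp X) by (unfold c; apply Rabs_left1; auto). clearbody c.
  assert (htan : forall q, 0 <= q -> p X + dpp X * (q - X) <= p q).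
  { intros q hq. apply subgrad; auto. }
  assert (hpXS : p XS < p X).
  { assert (p XS <= p X) by (apply hpni; lra). destruct H; auto. congruence. }
  pose (m := (p XS - p X) / (XS - X)).
  assert (hP0a : forall q, q <= X -> p0 p X XS c q = - c * (q - X) + p X).
  { intros q hq; unfold p0; destruct (Rle_dec q X); [reflexivity|lra]. }
  assert (hP0b : forall q, X < q -> p0 p X XS c q = Rmax 0 (m * (q - X) + p X)).
  { intros q hq; unfold p0; destruct (Rle_dec q X); [lra|reflexivity]. }
  assert (hm : m * (XS - X) = p XS - p X) by (unfold m; field; lra).
  clearbody m.
  assert (hmneg : m < 0) by nra.
  assert (chord_up : forall q, X < q < XS -> p q <= p X + m * (q - X)).
  { intros q hq. pose proof (conv_K p X q XS hpc hX0 ltac:(lra) ltac:(lra)).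
    apply Rmult_le_reg_l with (XS - X). lra. nra. }
  assert (chord_lo : forall q, XS < q -> p X + m * (q - X) <= p q).
  { intros q hq. pose proof (conv_K p X XS q hpc hX0 ltac:(lra) ltac:(lra)).
    apply Rmult_le_reg_l with (XS - X). lra. nra. }
  set (P0 := p0 p X XS c) in *.
  assert (P0le : forall q, 0 <= q <= X -> P0 q <= p q).
  { intros q hq. unfold P0; rewrite hP0a by lra. pose proof (htan q ltac:(lra)). nra. }
  assert (P0ge : forall q, X < q <= XS -> p q <= P0 q).
  { intros q hq. unfold P0; rewrite hP0b by lra.
    eapply Rle_trans; [|apply Rmax_r].
    destruct (Req_dec q XS). subst; nra. pose proof (chord_up q ltac:(lra)); lra. }
  assert (P0up : forall q, XS <= q -> P0 q <= p XS).
  { intros q hq. unfold P0; rewrite hP0b by lra. apply Rmax_lub. apply hpnn; lra. nra. }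
  assert (P0nn : forall q, XS <= q -> 0 <= P0 q).
  { intros q hq. unfold P0; rewrite hP0b by lra. apply Rmax_l. }
  assert (P0dn : forall q, 0 <= q <= XS -> p XS <= P0 q).
  { intros q hq. destruct (Rle_dec q X).
    - unfold P0; rewrite hP0a by lra. assert (0 <= c) by (rewrite hc; lra). nra.
    - eapply Rle_trans; [|apply P0ge; lra]. apply hpni; lra. }
  assert (hP0I : RI P0).
  { assert (cL1 : forall q, continuity_pt (fun q => - c * (q - X) + p X) q).
    { intros q. apply lip_cont with c. rewrite hc; lra. intros y.
      replace (- c * (y - X) + p X - (- c * (q - X) + p X)) with (- c * (y - q)) by ring.
      rewrite Rabs_mult, Rabs_Ropp, (Rabs_right c) by (rewrite hc; lra). lra. }
    assert (cL2 : forall q, continuity_pt (fun q => Rmax 0 (m * (q - X) + p X)) q).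
    { intros q. apply lip_cont with (Rabs m). apply Rabs_pos. intros y.
      eapply Rle_trans. apply Rmax0_lip.
      replace (m * (y - X) + p X - (m * (q - X) + p X)) with (m * (y - q)) by ring.
      rewrite Rabs_mult. lra. }
    assert (i1 : forall a b, a <= b -> b <= X -> Riemann_integrable P0 a b).
    { intros a b hab hb. apply Riemann_integrable_ext with (fun q => - c * (q - X) + p X).
      intros q hq. rewrite Rmin_left, Rmax_right in hq by lra. unfold P0; rewrite hP0a; lra.
      apply continuity_implies_RiemannInt; auto. }
    assert (i2 : forall a b, a <= b -> X <= a -> Riemann_integrable P0 a b).
    { intros a b hab hb. apply Riemann_integrable_ext with (fun q => Rmax 0 (m * (q - X) + p X)).
      intros q hq. rewrite Rmin_left, Rmax_right in hq by lra.
      destruct (Req_dec q X) as [eq|neq]. rewrite eq. unfold P0; rewrite hP0a by lra.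
      rewrite Rmax_right by (replace (m * (X - X) + p X) with (p X) by ring; apply hpnn; lra). ring.
      unfold P0; rewrite hP0b by lra. reflexivity.
      apply continuity_implies_RiemannInt; auto. }
    intros a b ha hab. destruct (Rle_dec b X). apply i1; auto.
    destruct (Rle_dec X a). apply i2; auto.
    apply RiemannInt_P24 with X. apply i1; lra. apply i2; lra. }
  assert (hopt0 : social_optimum P0 N C xS).
  { split; auto. intros y hy. unfold welfare. rewrite <- hXS.
    set (Y := sumN N y).
    assert (hY0 : 0 <= Y) by (apply sum_nonneg; auto).
    assert (hcost : sumN N (fun k => p XS * y k + (- p XS) * xS k) <=
                    sumN N (fun k => 1 * C k (y k) + (-1) * C k (xS k))).
    { apply sum_le. intros k hk. pose proof (C_sub k hk (xS k) (y k) (hxSnn k hk) (hy k hk)).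
      pose proof (KKT1 k hk). pose proof (hy k hk).
      destruct (Rle_lt_or_eq_dec 0 (xS k) (hxSnn k hk)) as [hpos|e].
      - pose proof (KKT2 k hk hpos). assert (dC k (xS k) = p XS) by lra. nra.
      - rewrite <- e in *. nra. }
    rewrite !sum_lin in hcost. rewrite <- hXS in hcost. fold Y in hcost.
    assert (hint : integral P0 0 Y - integral P0 0 XS <= p XS * (Y - XS)).
    { destruct (Rle_dec XS Y).
      - apply int_upper; auto. intros q hq; apply P0up; lra.
      - assert (p XS * (XS - Y) <= integral P0 0 XS - integral P0 0 Y).
        { apply int_lower; auto. lra. intros q hq; apply P0dn; lra. }
        lra. }
    lra. }
  split; auto.
  unfold efficiency.
  assert (hWx0 : 0 <= welfare p N C x).
  { unfold welfare. rewrite <- hX.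
    assert (p X * (X - 0) <= integral p 0 X - integral p 0 0).
    { apply int_lower; auto. lra. intros q hq; apply hpni; lra. }
    rewrite int_zero in H.
    assert (sumN N (fun k => C k (x k)) <= sumN N (fun k => p X * x k)).
    { apply sum_le. intros k hk. pose proof (hxnn k hk).
      destruct (Rle_lt_or_eq_dec 0 (x k) (hxnn k hk)) as [hpos|e].
      - pose proof (C_sub k hk (x k) 0 ltac:(lra) ltac:(lra)). rewrite C0 in H2 by auto.
        destruct (hxc k hk) as [hc1 _]. rewrite <- hX in hc1. specialize (hc1 hpos).
        assert (x k <= X) by (rewrite hX; apply term_le; auto).
        pose proof (hdpm0 ltac:(lra)). nra.
      - rewrite <- e. rewrite C0 by auto. lra. }
    rewrite sum_scal, <- hX in H0. lra. }
  assert (hWs : welfare p N C x <= welfare p N C xS) by (apply hxSopt; auto).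
  assert (hA : integral P0 0 X <= integral p 0 X).
  { pose proof (int_cmp P0 p 0 X hP0I hpI ltac:(lra) hX0 ltac:(intros q hq; apply P0le; lra)).
    rewrite !int_zero in H. lra. }
  assert (hB : integral p 0 XS - integral p 0 X <= integral P0 0 XS - integral P0 0 X).
  { apply int_cmp; auto. lra. intros q hq; apply P0ge; lra. }
  assert (hW0s : 0 <= welfare P0 N C xS).
  { destruct hopt0 as [_ Ho]. pose proof (Ho (fun _ => 0) ltac:(intros k hk; lra)).
    unfold welfare at 1 in H. rewrite sum_zero, int_zero in H.
    rewrite (sum_ext N (fun k => C k 0) (fun _ => 0)) in H by auto.
    rewrite sum_zero in H. lra. }
  revert hWx0 hWs hW0s. unfold welfare. rewrite <- hX, <- hXS. intros.
  set (Ix := integral p 0 X) in *. set (Is := integral p 0 XS) in *.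
  set (I0x := integral P0 0 X) in *. set (I0s := integral P0 0 XS) in *.
  set (Cx := sumN N (fun k => C k (x k))) in *. set (Cs := sumN N (fun k => C k (xS k))) in *.
  replace (I0x - Cx) with ((Ix - Cx) - (Ix - I0x)) by ring.
  replace (I0s - Cs) with ((Is - Cs) - (Ix - I0x) + ((I0s - I0x) - (Is - Ix))) by ring.
  apply final_ineq; lra.
Qed.
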